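(* Let $S^1\times S^2=\{(\theta,x)\in S^1\times D^3:|x|=1\}=\partial(S^1\times D^3)$, where $D^3$ is the closed unit ball, and let $i:S^1\times S^2\to S^1\times D^3$ be the inclusion. Then there exist contact forms $\lambda_A$ and $\lambda_B$ on $S^1\times S^2$ with $d\lambda_A=i^*\omega_A$ and $d\lambda_B=i^*\omega_B$.
   Context: Coordinates: $\theta\in\mathbb{R}/2\pi\mathbb{Z}$, $x=(x_1,x_2,x_3)\in D^3$. $\omega_A=x_1(d\theta\, dx_1+dx_2\, dx_3)+x_2(d\theta\, dx_2+dx_3\, dx_1)-2x_3(d\theta\, dx_3+dx_1\, dx_2)$ on $S^1\times D^3$. $\omega_B$ is the 2-form on the mapping torus $([0,2\pi]\times D^3)/\sim$ (diffeomorphic to $S^1\times D^3$, with boundary $S^1\times S^2$) obtained from the same expression $x_1(d\theta\, dx_1+dx_2\, dx_3)+x_2(d\theta\, dx_2+dx_3\, dx_1)-2x_3(d\theta\, dx_3+dx_1\, dx_2)$ on $[0,2\pi]\times D^3$ by gluing $\{2\pi\}\times D^3$ to $\{0\}\times D^3$ via $\phi(2\pi,x_1,x_2,x_3)=(0,x_1,-x_2,-x_3)$, which satisfies $\phi^*\omega=\omega$; for $\omega_B$, $S^1\times S^2$ denotes the boundary of this mapping torus. *)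

(* Defs.v *)
From HB Require Import structures.
From mathcomp Require Import all_boot all_order all_algebra.
From mathcomp Require Import all_classical all_reals all_analysis.
Set Implicit Arguments. Unset Strict Implicit. Unset Printing Implicit Defensive.
Import Order.TTheory GRing.Theory Num.Theory.
Import numFieldNormedType.Exports.
Local Open Scope ring_scope.

(* Points / tangent vectors of the universal cover R x R^3 of S^1 x R^3 are
   row vectors p : 'rV[R]_4 with coordinates (theta, x1, x2, x3) =
   (p 0 i0, p 0 i1, p 0 i2, p 0 i3). *)
Definition i0 : 'I_4 := @Ordinal 4 0 isT.
Definition i1 : 'I_4 := @Ordinal 4 1 isT.
Definition i2 : 'I_4 := @Ordinal 4 2 isT.
Definition i3 : 'I_4 := @Ordinal 4 3 isT.

Section Geometry.
Variable R : realType.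

Definition cr (p : 'rV[R]_4) (i : 'I_4) : R := p ord0 i.

Definition partial (i : 'I_4) (f : 'rV[R]_4 -> R) (p : 'rV[R]_4) : R :=
  derive f p (delta_mx 0 i).

Fixpoint Ck (k : nat) (f : 'rV[R]_4 -> R) : Prop :=
  match k with
  | 0 => continuous f
  | k'.+1 => (forall p, differentiable f p) /\ (forall i, Ck k' (partial i f))
  end.
Definition smooth (f : 'rV[R]_4 -> R) : Prop := forall k, Ck k f.

(* A 1-form  a_0 dtheta + a_1 dx1 + a_2 dx2 + a_3 dx3  given by its coefficients *)
Definition oneform := 'I_4 -> 'rV[R]_4 -> R.
Definition smooth_form (a : oneform) : Prop := forall i, smooth (a i).

Definition ev1 (a : oneform) (p u : 'rV[R]_4) : R :=
  \sum_(i < 4) a i p * cr u i.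

(* value of the exterior derivative da at p on (u, v):
   da = sum_{i<j} (d_i a_j - d_j a_i) dx_i /\ dx_j *)
Definition dform (a : oneform) (p u v : 'rV[R]_4) : R :=
  \sum_(i < 4) \sum_(j < 4) (partial i (a j) p - partial j (a i) p) * cr u i * cr v j.

Definition wedge_ad (a : oneform) (p u v w : 'rV[R]_4) : R :=
  ev1 a p u * dform a p v w - ev1 a p v * dform a p u w + ev1 a p w * dform a p u v.

(* omega = x1(dth dx1 + dx2 dx3) + x2(dth dx2 + dx3 dx1) - 2 x3(dth dx3 + dx1 dx2),
   evaluated at p on (u, v)  (dx_i /\ dx_j (u,v) = u_i v_j - u_j v_i) *)
Definition omega (p u v : 'rV[R]_4) : R :=
  let w i j := cr u i * cr v j - cr u j * cr v i in
    cr p i1 * (w i0 i1 + w i2 i3)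
  + cr p i2 * (w i0 i2 + w i3 i1)
  - 2 * cr p i3 * (w i0 i3 + w i1 i2).

Definition on_bdry (p : 'rV[R]_4) : Prop :=
  cr p i1 ^+ 2 + cr p i2 ^+ 2 + cr p i3 ^+ 2 = 1.

Definition tangent (p v : 'rV[R]_4) : Prop :=
  cr p i1 * cr v i1 + cr p i2 * cr v i2 + cr p i3 * cr v i3 = 0.

Definition dpullback_eq (a : oneform) (p : 'rV[R]_4) : Prop :=
  forall u v, tangent p u -> tangent p v -> dform a p u v = omega p u v.

Definition contact_at (a : oneform) (p : 'rV[R]_4) : Prop :=
  exists u v w, [/\ tangent p u, tangent p v, tangent p w & wedge_ad a p u v w != 0].

(* Deck transformations.  Case A: (theta, x) |-> (theta + 2 pi, x).
   Case B (mapping torus of phi(x) = (x1,-x2,-x3)):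
   (theta, x) |-> (theta + 2 pi, x1, -x2, -x3); its differential is flipB. *)
Definition e0 : 'rV[R]_4 := delta_mx 0 i0.
Definition flipB (v : 'rV[R]_4) : 'rV[R]_4 :=
  \row_j (if (j == i2) || (j == i3) then - v ord0 j else v ord0 j).
Definition deckA (p : 'rV[R]_4) : 'rV[R]_4 := p + (2 * pi) *: e0.
Definition deckB (p : 'rV[R]_4) : 'rV[R]_4 := flipB p + (2 * pi) *: e0.

(* a 1-form on the cover descends to the quotient iff it is invariant
   under the deck transformation (pullback invariance) *)
Definition invariantA (a : oneform) : Prop :=
  forall p u, ev1 a (deckA p) u = ev1 a p u.
Definition invariantB (a : oneform) : Prop :=
  forall p u, ev1 a (deckB p) (flipB u) = ev1 a p u.

End Geometry.

(* Main.v *)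
Require Import Defs.
From HB Require Import structures.
From mathcomp Require Import all_boot all_order all_algebra.
From mathcomp Require Import all_classical all_reals all_analysis.
From mathcomp Require Import ring lra.
Set Implicit Arguments. Unset Strict Implicit. Unset Printing Implicit Defensive.
Import Order.TTheory GRing.Theory Num.Theory.
Import numFieldNormedType.Exports.
Local Open Scope ring_scope.

Section P.
Variable R : realType.

Inductive pexp := PC of R | PX of 'I_4 | PAdd of pexp & pexp | PMul of pexp & pexp.

Fixpoint peval (e : pexp) (p : 'rV[R]_4) : R :=
  match e with
  | PC c => c
  | PX j => p ord0 j
  | PAdd a b => peval a p + peval b p
  | PMul a b => peval a p * peval b p
  end.

Fixpoint pder (i : 'I_4) (e : pexp) : pexp :=
  match e with
  | PC _ => PC 0
  | PX j => PC (if (nat_of_ord j == nat_of_ord i)%N then 1 else 0)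
  | PAdd a b => PAdd (pder i a) (pder i b)
  | PMul a b => PAdd (PMul a (pder i b)) (PMul b (pder i a))
  end.

Definition coordL (k : 'I_4) : {linear 'rV[R]_4 -> R}.
by exists (fun N : 'rV[R]_4 => N ord0 k); do 2![eexists]; do ?[constructor];
     rewrite ?mxE// => ? *; rewrite ?mxE//; move=> ?; rewrite !mxE.
Defined.

Lemma coordL_cont k : continuous (coordL k).
Proof. exact: coord_continuous. Qed.

Lemma peval_diff e p : differentiable (peval e) p.
Proof.
elim: e p => [c|j|a iha b ihb|a iha b ihb] p /=.
- exact: differentiable_cst.
- exact: differentiable_coord.
- exact: (differentiableD (iha p) (ihb p)).
- exact: (differentiableM (iha p) (ihb p)).
Qed.

Lemma peval_partial (i : 'I_4) e p :
  partial i (peval e) p = peval (pder i e) p.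
Proof.
rewrite /partial.
elim: e p => [c|k|a iha b ihb|a iha b ihb] p /=.
- exact: derive_cst.
- rewrite (_ : (fun p0 : 'rV[R]_4 => p0 ord0 k) = coordL k) //.
  rewrite deriveE; last by apply: linear_differentiable; exact: coordL_cont.
  rewrite diff_lin; last exact: coordL_cont.
  rewrite /= mxE /=.
  by case: (eqVneq k i) => [->|ne]; rewrite ?eqxx // ifN //; move: ne; apply: contra => /eqP h; apply/eqP/val_inj.
- rewrite (_ : (fun x => _) = peval a + peval b) //.
  rewrite deriveD ?iha ?ihb //; exact: diff_derivable (peval_diff _ _).
- rewrite (_ : (fun x => _) = peval a * peval b) //.
  rewrite deriveM ?iha ?ihb; try exact: diff_derivable (peval_diff _ _).
  by [].
Qed.

Lemma peval_Ck k e : Ck k (peval e).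
Proof.
elim: k e => [|k ih] e /=.
  by move=> x; apply: differentiable_continuous; exact: peval_diff.
split; first exact: peval_diff.
move=> i; rewrite (_ : partial i (peval e) = peval (pder i e)); first exact: ih.
by apply/funext => p; rewrite peval_partial.
Qed.

Definition lamE (i : 'I_4) : pexp :=
  match nat_of_ord i with
  | 0 => PMul (PC (-(1/2))) (PAdd (PAdd (PMul (PX i1) (PX i1)) (PMul (PX i2) (PX i2)))
                                  (PMul (PC (-2)) (PMul (PX i3) (PX i3))))
  | 1 => PMul (PX i2) (PX i3)
  | 2 => PMul (PC (-1)) (PMul (PX i1) (PX i3))
  | _ => PC 0
  end.

Definition lam : oneform R := fun i => peval (lamE i).

Lemma sum4 (F : 'I_4 -> R) : \sum_(i < 4) F i = F i0 + F i1 + F i2 + F i3.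
Proof.
rewrite !big_ord_recl big_ord0 addr0 !addrA.
by congr (_ + _ + _ + _); congr F; apply: val_inj.
Qed.

Lemma plam i j p : partial i (lam j) p = peval (pder i (lamE j)) p.
Proof. exact: peval_partial. Qed.

Lemma lam_smooth : smooth_form lam.
Proof. by move=> i k; apply: peval_Ck. Qed.

Lemma dlam p u v : dform lam p u v = omega p u v.
Proof.
rewrite /dform !sum4 !plam /= /omega /cr.
by field.
Qed.


Lemma e0E (j : 'I_4) : (e0 R) ord0 j = (if nat_of_ord j == 0%N then 1 else 0).
Proof. by rewrite /e0 mxE /=; case: j => [[|m] ?]. Qed.

Lemma deckA_c (p : 'rV[R]_4) (j : 'I_4) :
  (deckA p) ord0 j = p ord0 j + (if nat_of_ord j == 0%N then 2 * pi else 0).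
Proof. by rewrite /deckA !mxE eqxx /=; case: j => [[|m] ?] /=; rewrite ?mulr1 ?mulr0 ?addr0. Qed.

Lemma flipB_c (p : 'rV[R]_4) (j : 'I_4) :
  (flipB p) ord0 j = (if (nat_of_ord j == 2%N) || (nat_of_ord j == 3%N) then - p ord0 j else p ord0 j).
Proof. by rewrite /flipB mxE; case: j => [[|[|[|[|m]]]] ?]. Qed.

Lemma deckB_c (p : 'rV[R]_4) (j : 'I_4) :
  (deckB p) ord0 j = (flipB p) ord0 j + (if nat_of_ord j == 0%N then 2 * pi else 0).
Proof. rewrite /deckB [in LHS]mxE; congr (_ + _); rewrite mxE e0E; case: ifP; rewrite ?mulr1 ?mulr0 //. Qed.

Lemma lam_invA : invariantA lam.
Proof.
move=> p u; rewrite /ev1 !sum4 /lam /= /cr !deckA_c /=.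
by field.
Qed.

Lemma lam_invB : invariantB lam.
Proof.
move=> p u; rewrite /ev1 !sum4 /lam /= /cr !deckB_c !flipB_c /=.
by field.
Qed.


Definition mkv (a b c : R) : 'rV[R]_4 := \row_j nth 0 [:: 0; a; b; c] j.
Lemma mkv_c a b c (j : 'I_4) : (mkv a b c) ord0 j = nth 0 [:: 0; a; b; c] j.
Proof. by rewrite /mkv mxE. Qed.

Definition Qn (p : 'rV[R]_4) : R :=
  let x1 := p ord0 i1 in let x2 := p ord0 i2 in let x3 := p ord0 i3 in
  (x1 * x1 + x2 * x2 - 2 * (x3 * x3)) ^+ 2 + 6 * (x3 * x3) * (x1 * x1 + x2 * x2).

Lemma Qn_neq0 p : on_bdry p -> Qn p != 0.
Proof.
rewrite /on_bdry /cr /Qn => hb.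
set x1 := p ord0 i1 in hb *; set x2 := p ord0 i2 in hb *; set x3 := p ord0 i3 in hb *.
have -> : (x1 * x1 + x2 * x2 - 2 * (x3 * x3)) ^+ 2 + 6 * (x3 * x3) * (x1 * x1 + x2 * x2)
  = 1 + 3 * (x3 * x3) ^+ 2 + (x1 ^+ 2 + x2 ^+ 2 + x3 ^+ 2 - 1) * (1 + (x1 ^+ 2 + x2 ^+ 2 + x3 ^+ 2))
  by ring.
rewrite hb subrr mul0r addr0.
have := sqr_ge0 (x3 * x3).
move=> h; apply/negP => /eqP h2. lra.
Qed.

Lemma W1 p : wedge_ad lam p (e0 R) (mkv (- p ord0 i3) 0 (p ord0 i1)) (mkv (p ord0 i2) (- p ord0 i1) 0)
  = - (p ord0 i1) * Qn p / 2.
Proof.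
rewrite /wedge_ad !dlam /omega /ev1 !sum4 /lam /cr !e0E !mkv_c /Qn /=.
by field.
Qed.

Lemma W2 p : wedge_ad lam p (e0 R) (mkv (p ord0 i2) (- p ord0 i1) 0) (mkv 0 (p ord0 i3) (- p ord0 i2))
  = - (p ord0 i2) * Qn p / 2.
Proof.
rewrite /wedge_ad !dlam /omega /ev1 !sum4 /lam /cr !e0E !mkv_c /Qn /=.
by field.
Qed.

Lemma W3 p : wedge_ad lam p (e0 R) (mkv 0 (p ord0 i3) (- p ord0 i2)) (mkv (- p ord0 i3) 0 (p ord0 i1))
  = - (p ord0 i3) * Qn p / 2.
Proof.
rewrite /wedge_ad !dlam /omega /ev1 !sum4 /lam /cr !e0E !mkv_c /Qn /=.
by field.
Qed.

Lemma tang_e0 p : tangent p (e0 R).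
Proof. by rewrite /tangent /cr !e0E /=; ring. Qed.

Lemma lam_contact p : on_bdry p -> contact_at lam p.
Proof.
move=> hb; have hQ := Qn_neq0 hb.
have nz : forall x : R, x != 0 -> - x * Qn p / 2 != 0.
  move=> x hx; rewrite mulf_neq0 // ?mulf_neq0 ?oppr_eq0 ?invr_eq0 ?pnatr_eq0 //.
have [h1|h1] := eqVneq (p ord0 i1) 0; last first.
  exists (e0 R), (mkv (- p ord0 i3) 0 (p ord0 i1)), (mkv (p ord0 i2) (- p ord0 i1) 0).
  split; [exact: tang_e0 | | | by rewrite W1 nz];
  by rewrite /tangent /cr !mkv_c /=; ring.
have [h2|h2] := eqVneq (p ord0 i2) 0; last first.
  exists (e0 R), (mkv (p ord0 i2) (- p ord0 i1) 0), (mkv 0 (p ord0 i3) (- p ord0 i2)).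
  split; [exact: tang_e0 | | | by rewrite W2 nz];
  by rewrite /tangent /cr !mkv_c /=; ring.
have [h3|h3] := eqVneq (p ord0 i3) 0.
  by move: hb; rewrite /on_bdry /cr h1 h2 h3 => /eqP; rewrite expr0n /= !addr0 eq_sym oner_eq0.
exists (e0 R), (mkv 0 (p ord0 i3) (- p ord0 i2)), (mkv (- p ord0 i3) 0 (p ord0 i1)).
split; [exact: tang_e0 | | | by rewrite W3 nz];
by rewrite /tangent /cr !mkv_c /=; ring.
Qed.

End P.

Theorem mainTheorem7 (R : realType) :
  (exists lamA : oneform R,
     [/\ smooth_form lamA, invariantA lamA &
         forall p, on_bdry p -> dpullback_eq lamA p /\ contact_at lamA p]) /\
  (exists lamB : oneform R,
     [/\ smooth_form lamB, invariantB lamB &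
         forall p, on_bdry p -> dpullback_eq lamB p /\ contact_at lamB p]).
Proof.
split; exists (@lam R); split;
  [exact: lam_smooth | exact: lam_invA | | exact: lam_smooth | exact: lam_invB | ];
  by move=> p hb; split; [move=> u v _ _; exact: dlam | exact: lam_contact].
Qed.
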